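(* Let $X$ be a finite set and $\mathcal{P}^1,\dots,\mathcal{P}^M$ partitions of $X$, with Multiscale Clustering Filtration $(K^m)_{m\le M}$ and Multiscale Clustering Nerve Filtration $(N^m)_{m\le M}$. Then for all integers $k\ge0$, $1\le m\le M$ and $p\ge0$ with $m+p\le M$, $H_k^p(N^m)\cong H_k^p(K^m)$.
   Context: A partition of $X$ is a collection of non-empty pairwise disjoint subsets (clusters) whose union is $X$; $\#\mathcal{P}$ is its number of clusters. For a finite non-empty set $C$, $\Delta C$ is the set of all non-empty subsets of $C$. The MCF is $K^m:=\bigcup_{l\le m}\bigcup_{C\in\mathcal{P}^l}\Delta C$. For $m\le M$ let $A(m)=\{(m',i): m'\le m,\ 1\le i\le\#\mathcal{P}^{m'}\}$ and let $C_{(m',i)}$ be the $i$-th cluster of $\mathcal{P}^{m'}$ (for a fixed enumeration of the clusters of each partition). The Multiscale Clustering Nerve $N^m$ is the nerve of the family $(C_\alpha)_{\alpha\in A(m)}$: the abstract simplicial complex on vertex set $A(m)$ whose simplices are the non-empty $S\subseteq A(m)$ with $\bigcap_{\alpha\in S}C_\alpha\neq\emptyset$; thus $N^m\subseteq N^{m+p}$. Homology is simplicial homology over a field, and $H_k^p(F^m)$ denotes the image of the map $H_k(F^m)\to H_k(F^{m+p})$ induced by inclusion, for $F=K$ or $F=N$. *)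

(* Defs.v *)
From HB Require Import structures.
From mathcomp Require Import all_boot all_order all_algebra.
Set Implicit Arguments. Unset Strict Implicit. Unset Printing Implicit Defensive.
Import GRing.Theory.
Local Open Scope ring_scope.

(* Chains live in the row space
   'rV[F]_#|{set V}| (coordinate of a simplex s is at index enum_rank s).
   Orientation: vertices are ordered by enum_rank. *)

Section Homology.
Variables (F : fieldType) (V : finType).

Local Notation N := #|{set V}|.

Definition face_sign (s : {set V}) (x : V) : F :=
  (-1) ^+ #|[set y in s | (enum_rank y < enum_rank x)%N]|.

(* coefficient of the face t in the boundary of s (unaugmented: t <> set0) *)
Definition bd_coef (s t : {set V}) : F :=
  if (t != set0) && (t \subset s) && (#|s :\: t| == 1)%N then
    match [pick x in s :\: t] with Some x => face_sign s x | None => 0 end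
  else 0.

Definition bdmx : 'M[F]_N := \matrix_(i, j) bd_coef (enum_val i) (enum_val j).

Definition chainmx (K : {set {set V}}) (k : nat) : 'M[F]_N :=
  \matrix_(i, j) ((i == j) && (enum_val i \in K) && (#|enum_val i| == k.+1)%N)%:R.

Definition cyclemx (K : {set {set V}}) (k : nat) : 'M[F]_N :=
  (chainmx K k :&: kermx bdmx)%MS.

Definition bdrymx (K : {set {set V}}) (k : nat) : 'M[F]_N :=
  (chainmx K k.+1 *m bdmx)%MS.

(* dimension of H_k^p: the image of H_k(K) -> H_k(L) (K a subcomplex of L),
   which is (Z_k(K) + B_k(L)) / B_k(L). *)
Definition pers_dim (K L : {set {set V}}) (k : nat) : nat :=
  (\rank (cyclemx K k + bdrymx L k)%MS - \rank (bdrymx L k))%N.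

End Homology.

(* ---------- Multiscale clustering filtration and nerve ----------
   Partitions P^1..P^M of X are P : 'I_M -> {set {set X}}, scale l (1-based)
   being P (l-1).  K^m uses scales l <= m, i.e. 0-based indices < m. *)

Definition MCF (X : finType) (M : nat) (P : 'I_M -> {set {set X}}) (m : nat)
  : {set {set X}} :=
  [set s : {set X} | (s != set0) &&
     [exists l : 'I_M, ((l < m)%N && [exists C in P l, s \subset C])]].

(* vertices of the nerve: pairs (scale, cluster), i.e. A(m) *)
Definition MCN (X : finType) (M : nat) (P : 'I_M -> {set {set X}}) (m : nat)
  : {set {set ('I_M * {set X})}} :=
  [set S : {set ('I_M * {set X})} | [&& S != set0,
     [forall a in S, ((a.1 < m)%N && (a.2 \in P a.1))] &
     [exists x : X, [forall a in S, x \in a.2]]]].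

(* Main.v *)
Require Import Defs.
From HB Require Import structures.
From mathcomp Require Import all_boot all_order all_algebra.
From mathcomp Require Import zify.

Module MCNHelpers.
Set Implicit Arguments. Unset Strict Implicit. Unset Printing Implicit Defensive.
Import GRing.Theory.
Local Open Scope ring_scope.

Lemma sum_antisym (T : finType) (M : zmodType) (s : {set T}) (r : T -> nat)
  (rinj : injective r) (Q : T -> T -> bool) (G : T -> T -> M) :
  (forall y z, Q y z = Q z y) -> (forall y z, y \in s -> z \in s -> y != z -> G y z = - G z y) ->
  \sum_(y in s) \sum_(z in s | (z != y) && Q y z) G y z = 0.
Proof.
move=> Qs Ga.
have E : forall y, \sum_(z in s | (z != y) && Q y z) G y z =
  \sum_(z in s) (if (r z < r y)%N && Q y z then G y z else 0) +
  \sum_(z in s) (if (r y < r z)%N && Q y z then G y z else 0).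
  move=> y; rewrite -big_split big_mkcondr /=; apply: eq_bigr => z _.
  case: (ltngtP (r z) (r y)) => [h|h|/rinj ->]; rewrite ?eqxx /= ?addr0 ?add0r //.
    by have -> : z != y by apply/eqP => zy; move: h; rewrite zy ltnn.
  by have -> : z != y by apply/eqP => zy; move: h; rewrite zy ltnn.
under eq_bigr => y _ do rewrite E.
rewrite big_split /= [X in _ + X]exchange_big /=.
rewrite -big_split /=; apply: big1 => y ys; rewrite -big_split /=; apply: big1 => z zs.
rewrite Qs; case: ifP => [/andP[h _]|_]; last by rewrite addr0.
have zy : z != y by apply/eqP => zy; move: h; rewrite zy ltnn.
by rewrite (Ga _ _ zs ys zy) addrN.
Qed.

Section Basic.
Variables (F : fieldType) (V : finType).
Local Notation N := #|{set V}|.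
Local Notation bd := (bdmx F V).
Local Notation fs := (face_sign F).

Lemma setDD1 (s : {set V}) y : y \in s -> s :\: (s :\ y) = [set y].
Proof.
move=> ys; apply/setP => z; rewrite !inE.
by case: (z =P y) => [->|]; rewrite ?ys //=; case: (z \in s).
Qed.

Definition ev (s : {set V}) : 'rV[F]_N := delta_mx 0 (enum_rank s).

Lemma ev_mul s p (A : 'M[F]_(N, p)) : ev s *m A = row (enum_rank s) A.
Proof. by rewrite rowE. Qed.

Lemma evE s j : ev s 0 j = (enum_val j == s)%:R.
Proof.
by rewrite /ev mxE eqxx /= (can2_eq enum_valK enum_rankK).
Qed.

Lemma bd_coef_face (s : {set V}) (y : V) : y \in s -> s :\ y != set0 ->
  bd_coef F s (s :\ y) = fs s y.
Proof.
move=> ys ne; rewrite /bd_coef ne subD1set /=.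
rewrite setDD1 // cards1 eqxx /=.
case: pickP => [x|/(_ y)]; last by rewrite inE eqxx.
by rewrite inE => /eqP ->.
Qed.

Lemma bd_ev (s : {set V}) : ev s *m bd = \sum_(y in s | s :\ y != set0) fs s y *: ev (s :\ y).
Proof.
apply/rowP => j; rewrite ev_mul !mxE summxE enum_rankK.
set t := enum_val j.
under eq_bigr => y _ do rewrite !mxE eqxx /= -(can2_eq enum_valK enum_rankK).
have H : forall y, y \in s -> s :\ y != set0 -> (t == s :\ y) = (t != set0) && (t \subset s) && (s :\: t == [set y]).
  move=> y ys yn; apply/eqP/idP => [->|/andP[/andP [tn ts] /eqP st]].
    by rewrite yn subD1set setDD1 // eqxx.
  apply/setP => z; rewrite !inE; apply/idP/andP => [zt|[zy zs]].
    split; last exact: (subsetP ts).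
    apply/negP => /eqP zy; have : z \in s :\: t by rewrite st inE zy.
    by rewrite inE zt.
  apply/negPn/negP => zt; have : z \in s :\: t by rewrite inE zt zs.
  by rewrite st inE (negbTE zy).
rewrite /bd_coef.
case: ifP => [/andP[/andP[tn ts] /cards1P[x sx]]|hc].
  have : x \in s :\: t by rewrite sx inE.
  rewrite inE => /andP[xt xs].
  have xn : s :\ x != set0.
    have tsx : t \subset s :\ x.
      apply/subsetP => z zt; rewrite !inE (subsetP ts) // andbT.
      by apply/eqP => zx; move: xt; rewrite -zx zt.
    case/set0Pn: tn => z zt; apply/set0Pn; exists z; exact: (subsetP tsx z zt).
  have tx : t = s :\ x by apply/eqP; rewrite H // tn ts sx eqxx.
  rewrite (bigD1 x) /=; last by rewrite xs xn.
  rewrite big1 ?addr0; last first.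
    move=> y /andP[/andP[ys yn] yx]; rewrite (_ : (enum_val j == s :\ y) = false) ?mulr0 //.
    apply/negbTE; rewrite -/t (H y ys yn) tn ts sx; apply/negP => /eqP/setP/(_ x).
    by rewrite !inE eqxx eq_sym (negbTE yx).
  rewrite -/t; case: pickP => [z|/(_ x)]; last by rewrite sx inE eqxx.
  by rewrite sx inE => /eqP ->; rewrite {1}tx eqxx mulr1.
rewrite big1 // => y /andP[ys yn]; rewrite -/t (H y ys yn).
case: (t =P set0) => [_|/eqP tn] /=; first by rewrite mulr0.
case: (boolP (t \subset s)) => ts /=; last by rewrite mulr0.
case: (s :\: t =P [set y]) => st; last by rewrite mulr0.
by move: hc; rewrite tn ts st cards1.
Qed.


Lemma row_ev (p : nat) (A : 'M[F]_(N, p)) i : row i A = ev (enum_val i) *m A.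
Proof. by rewrite /ev enum_valK rowE. Qed.

Lemma sign_sq (n : nat) : ((-1) ^+ n) * ((-1) ^+ n) = 1 :> F.
Proof. by rewrite -exprMn mulrNN mulr1 expr1n. Qed.

Lemma fsD1 (s : {set V}) y z : y \in s ->
  fs (s :\ y) z = fs s z * (-1) ^+ (enum_rank y < enum_rank z)%N.
Proof.
move=> ys; rewrite /face_sign (cardsD1 y [set w in s | _]) inE ys /=.
rewrite addnC exprD -mulrA sign_sq mulr1; congr (_ ^+ _); apply: eq_card => w.
by rewrite !inE andbA.
Qed.

Lemma fs_pair (s : {set V}) y z : y \in s -> z \in s -> y != z ->
  fs s y * fs (s :\ y) z = - (fs s z * fs (s :\ z) y).
Proof.
move=> ys zs yz; rewrite !fsD1 //.
have rn : (enum_rank y : nat) != enum_rank z.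
  by apply: contra yz => /eqP /ord_inj /enum_rank_inj ->.
case: (ltngtP (enum_rank y) (enum_rank z)) rn => // h _; 
  rewrite /= ?expr1 ?expr0 ?mulr1 ?mulrN1 ?opprK ?mulrN; by rewrite ?opprK mulrC.
Qed.

Lemma bdbd : bd *m bd = 0.
Proof.
apply/row_matrixP => i; rewrite row0 row_ev; set s := enum_val i.
rewrite mulmxA bd_ev mulmx_suml.
under eq_bigr => y _ do rewrite -scalemxAl bd_ev scaler_sumr.
rewrite big_mkcondr /=.
rewrite (eq_bigr (fun y => \sum_(z in s | (z != y) && (s :\ y :\ z != set0))
    fs s y *: (fs (s :\ y) z *: ev (s :\ y :\ z)))); last first.
  move=> y ys; case: ifP => yn.
    by apply: eq_bigl => z; rewrite in_setD1; case: (z != y); case: (z \in s).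
  move/negbFE/eqP: yn => yn; rewrite big_pred0 // => z.
  by rewrite yn set0D eqxx !andbF.
apply: (@sum_antisym _ _ s (fun v => nat_of_ord (enum_rank v))).
- by move=> a b /ord_inj /enum_rank_inj.
- by move=> a b; rewrite !setDDl setUC.
move=> a b ha hb ab; rewrite [s :\ b :\ a]setDDl setUC -setDDl !scalerA -scaleNr.
by congr (_ *: _); apply: fs_pair.
Qed.

Definition dmx (Q : pred {set V}) : 'M[F]_N :=
  \matrix_(i, j) ((i == j) && Q (enum_val i))%:R.

Lemma row_dmx Q i : row i (dmx Q) = if Q (enum_val i) then ev (enum_val i) else 0.
Proof.
apply/rowP => j; rewrite !mxE; case: ifP => q; rewrite ?mxE ?andbT ?andbF //.
by rewrite enum_valK eqxx /= eq_sym.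
Qed.

Lemma ev_dmx (Q : pred {set V}) s : Q s -> (ev s <= dmx Q)%MS.
Proof.
move=> q; apply: (eq_row_sub (enum_rank s)); rewrite row_dmx enum_rankK.
by rewrite q.
Qed.

Lemma dmxM_sub (Q : pred {set V}) p (A : 'M[F]_(N, p)) m (B : 'M[F]_(m, p)) :
  (forall s, Q s -> ev s *m A <= B)%MS -> (dmx Q *m A <= B)%MS.
Proof.
move=> H; apply/row_subP => i; rewrite row_mul row_dmx.
by case: ifP => q; [apply: H | rewrite mul0mx sub0mx].
Qed.

Lemma dmx_subM (Q : pred {set V}) p (A : 'M[F]_(N, p)) m (B : 'M[F]_(m, p)) (v : 'rV[F]_N) :
  (forall s, Q s -> ev s *m A <= B)%MS -> (v <= dmx Q)%MS -> (v *m A <= B)%MS.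
Proof.
by move=> H /submxP[w ->]; rewrite -mulmxA; apply: mulmx_sub; apply: dmxM_sub.
Qed.

Lemma dmxS (Q Q' : pred {set V}) : (forall s, Q s -> Q' s) -> (dmx Q <= dmx Q')%MS.
Proof.
move=> H; rewrite -[dmx Q]mulmx1; apply: dmxM_sub => s q; rewrite mulmx1.
exact: ev_dmx (H _ q).
Qed.

Lemma dmx_fix (Q : pred {set V}) (A : 'M[F]_N) (v : 'rV[F]_N) :
  (forall s, Q s -> ev s *m A = ev s) -> (v <= dmx Q)%MS -> v *m A = v.
Proof.
move=> H /submxP[w ->]; rewrite -mulmxA; congr (_ *m _).
apply/row_matrixP => i; rewrite row_mul row_dmx; case: ifP => q; last by rewrite mul0mx.
exact: H.
Qed.

Lemma dmx_kill (Q : pred {set V}) p (A : 'M[F]_(N, p)) (v : 'rV[F]_N) :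
  (forall s, Q s -> ev s *m A = 0) -> (v <= dmx Q)%MS -> v *m A = 0.
Proof.
move=> H /submxP[w ->]; rewrite -mulmxA.
have -> : dmx Q *m A = 0; last by rewrite mulmx0.
apply/row_matrixP => i; rewrite row_mul row_dmx row0; case: ifP => q; last by rewrite mul0mx.
exact: H.
Qed.

Lemma chainmx_dmx (K : {set {set V}}) k :
  chainmx F K k = dmx (fun s => (s \in K) && (#|s| == k.+1)).
Proof. by apply/matrixP => i j; rewrite !mxE andbA. Qed.

End Basic.


Section SetFacts.
Variable V : finType.
Implicit Types (U Y : {set V}) (x y : V).

Lemma setIU1_notin U Y x : x \notin Y -> (x |: U) :&: Y = U :&: Y.
Proof.
move=> xY; apply/setP => z; rewrite !inE; case: (z =P x) => [->|] //=.
by rewrite (negbTE xY) andbF.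
Qed.

Lemma setID1_notin U Y y : y \notin Y -> (U :\ y) :&: Y = U :&: Y.
Proof.
move=> yY; apply/setP => z; rewrite !inE; case: (z =P y) => [->|] //=.
by rewrite (negbTE yY) !andbF.
Qed.

Lemma setID1 U Y y : (U :\ y) :&: Y = (U :&: Y) :\ y.
Proof. by apply/setP => z; rewrite !inE andbA. Qed.

Lemma cardID1 U Y y : y \in U -> y \in Y -> #|(U :\ y) :&: Y| = (#|U :&: Y|).-1.
Proof.
move=> yU yY; rewrite setID1 (cardsD1 y (U :&: Y)) inE yU yY.
by rewrite add1n.
Qed.

Lemma cardD1' U y : y \in U -> #|U :\ y| = #|U|.-1.
Proof. by move=> yU; rewrite (cardsD1 y U) yU add1n. Qed.

Lemma setD1U1 U x y : x != y -> (x |: U) :\ y = x |: (U :\ y).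
Proof.
move=> xy; apply/setP => z; rewrite !inE; case: (z =P x) => [->|] //=.
by rewrite xy.
Qed.

Lemma sub_setD1 U Y y : y \notin Y -> U :&: Y \subset U :\ y.
Proof.
move=> yY; apply/subsetP => z; rewrite !inE => /andP[zU zY]; rewrite zU andbT.
by apply: contraNneq yY => <-.
Qed.

Lemma ne_sub (A B : {set V}) : A \subset B -> A != set0 -> B != set0.
Proof.
move=> AB /set0Pn[z zA]; apply/set0Pn; exists z; exact: (subsetP AB).
Qed.

End SetFacts.

Lemma fs_pair2' (F : fieldType) (V : finType) (T : {set V}) x y :
  x \in T -> y \in T -> x != y ->
  face_sign F T x * face_sign F T y +
  face_sign F (T :\ x) y * face_sign F (T :\ y) x = 0.
Proof.
move=> xT yT xy; rewrite !fsD1 //.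
have rn : (enum_rank x : nat) != enum_rank y.
  by apply: contra xy => /eqP /ord_inj /enum_rank_inj ->.
case: (ltngtP (enum_rank x) (enum_rank y)) rn => // h _;
  rewrite /= ?expr1 ?expr0 ?mulr1 ?mulrN1 ?mulrN ?mulNr ?opprK (mulrC (face_sign F T y)) ?addrN ?addNr //.
Qed.

Lemma fs_pair2 (F : fieldType) (V : finType) (U : {set V}) x y :
  x \notin U -> y \in U ->
  face_sign F (x |: U) x * face_sign F (x |: U) y +
  face_sign F U y * face_sign F (x |: (U :\ y)) x = 0.
Proof.
move=> xU yU; have xy : x != y by apply: contraNneq xU => ->.
have := @fs_pair2' F V (x |: U) x y (setU11 _ _) (setU1r _ yU) xy.
by rewrite setU1K // setD1U1.
Qed.

Lemma addrK3 (M : zmodType) (a b c : M) : a + b + c - a = b + c.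
Proof. by rewrite addrAC [a + b]addrC addrK. Qed.

Section RelAcyc.
Variables (F : fieldType) (V : finType) (W : {set {set V}}) (Y : {set V})
  (g : {set V} -> V).
Hypotheses (Wface : forall U T : {set V}, U \in W -> T \subset U -> T != set0 -> T \in W)
 (gY : forall U : {set V}, U \in W -> U :&: Y != set0 -> g (U :&: Y) \notin Y)
 (gW : forall U : {set V}, U \in W -> U :&: Y != set0 -> g (U :&: Y) |: U \in W).
Local Notation N := #|{set V}|.
Local Notation bd := (bdmx F V).
Local Notation fs := (face_sign F).
Local Notation ev := (@ev F V).
Local Notation dmx := (@dmx F V).

Definition hcoef (U T : {set V}) : F :=
  if (U :&: Y != set0) && (g (U :&: Y) \notin U) && (T == g (U :&: Y) |: U)
  then fs T (g (U :&: Y)) else 0.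
Definition hm : 'M[F]_N := \matrix_(i, j) hcoef (enum_val i) (enum_val j).

Lemma h_ev U : ev U *m hm =
  if (U :&: Y != set0) && (g (U :&: Y) \notin U)
  then fs (g (U :&: Y) |: U) (g (U :&: Y)) *: ev (g (U :&: Y) |: U) else 0.
Proof.
rewrite ev_mul; case: ifP => c; apply/rowP => j; rewrite !mxE enum_rankK /hcoef c /=.
  rewrite (can2_eq enum_valK enum_rankK); case: eqP => [->|_]; by rewrite ?enum_rankK ?mulr1 ?mulr0.
by [].
Qed.

Definition Lv (j n : nat) : pred {set V} :=
  fun U => (U \in W) && (#|U :&: Y| <= j)%N && (#|U| == n).
Definition Dm : 'M[F]_N := hm *m bd + bd *m hm.
Definition Em : 'M[F]_N := 1%:M - Dm.

Lemma h_supp U : U \in W -> (ev U *m hm <= dmx (Lv #|(U :&: Y)%SET| #|U|.+1))%MS.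
Proof.
move=> UW; rewrite h_ev; case: ifP => [/andP[ne xn]|_]; last by rewrite sub0mx.
apply: scalemx_sub; apply: ev_dmx; rewrite /Lv gW // setIU1_notin ?gY //.
by rewrite leqnn cardsU1 xn /=.
Qed.

Lemma Em_ev U : ev U *m Em = ev U - ev U *m Dm.
Proof. by rewrite /Em mulmxBr mulmx1. Qed.

Lemma Dm_ev U : ev U *m Dm = ev U *m hm *m bd +
  \sum_(y in U | U :\ y != set0) fs U y *: (ev (U :\ y) *m hm).
Proof.
rewrite /Dm mulmxDr !mulmxA bd_ev mulmx_suml; congr (_ + _).
by apply: eq_bigr => y _; rewrite scalemxAl.
Qed.

Lemma E_pure U : U \in W -> U :&: Y = set0 -> ev U *m Em = ev U.
Proof.
move=> UW U0; rewrite Em_ev Dm_ev h_ev U0 eqxx /= mul0mx add0r big1 ?subr0 //.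
move=> y _; rewrite h_ev setID1 U0 set0D eqxx /=; by rewrite scaler0.
Qed.

Lemma E_low U : U \in W -> U :&: Y != set0 ->
  (ev U *m Em <= dmx (Lv (#|(U :&: Y)%SET|).-1 #|U|))%MS.
Proof.
move=> UW ne; set S := U :&: Y; set x := g S.
have xY : x \notin Y by apply: gY.
set L := dmx _.
have HY : forall y, y \in U -> y \in Y -> U :\ y != set0 ->
    (ev (U :\ y) *m hm <= L)%MS.
  move=> y yU yY yn; have W' : U :\ y \in W by apply: Wface UW (subD1set U y) yn.
  apply: submx_trans (h_supp W') _; apply: dmxS => T; rewrite /Lv.
  rewrite cardID1 // cardD1' // prednK; first by [].
  by apply/card_gt0P; exists y.
rewrite Em_ev -opprB eqmx_opp.
case: (boolP (x \in U)) => xU.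
  rewrite Dm_ev h_ev -/S -/x xU andbF mul0mx add0r.
  have xn : U :\ x != set0 by apply: ne_sub (sub_setD1 U xY) ne.
  rewrite (bigD1 x) /=; last by rewrite xU xn.
  rewrite h_ev setID1_notin // -/S ne -/x !inE eqxx /= setD1K //.
  rewrite scalerA sign_sq scale1r addrC addrK.
  apply: summx_sub => y /andP[/andP[yU yn] yx].
  case: (boolP (y \in Y)) => yY; first by apply: scalemx_sub; apply: HY.
  rewrite h_ev setID1_notin // -/S -/x ne !inE xU andbT.
  by rewrite eq_sym yx /= scaler0 sub0mx.
have Une : U != set0 by apply: ne_sub (subsetIl U Y) ne.
rewrite Dm_ev h_ev -/S -/x ne xU /= -scalemxAl bd_ev.
have E1 : \sum_(y in x |: U | (x |: U) :\ y != set0) fs (x |: U) y *: ev ((x |: U) :\ y)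
        = \sum_(y in x |: U) fs (x |: U) y *: ev ((x |: U) :\ y).
  apply: eq_bigl => y; case yin : (y \in x |: U) => //=.
  case: (y =P x) => [->|/eqP yx]; first by rewrite setU1K.
  by apply/set0Pn; exists x; rewrite !inE eqxx eq_sym yx.
rewrite E1 big_setU1 //= setU1K // scalerDr scalerA sign_sq scale1r.
rewrite addrK3 scaler_sumr big_mkcondr /= -big_split /=.
apply: summx_sub => y yU.
have xy : x != y by apply: contraNneq xU => ->.
case: (boolP (y \in Y)) => yY.
  apply: addmx_sub.
    apply: scalemx_sub; apply: scalemx_sub; apply: ev_dmx; rewrite /Lv.
    have -> : (x |: U) :\ y \in W.
      apply: Wface (gW UW ne) (subD1set _ _) _.
      by apply/set0Pn; exists x; rewrite !inE eqxx xy.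
    rewrite setD1U1 // setIU1_notin // cardID1 // leqnn cardsU1 !inE (negbTE xU) andbF /=.
    by rewrite cardD1' // add1n prednK //; apply/card_gt0P; exists y.
  by case: ifP => yn; [apply: scalemx_sub; apply: HY | exact: sub0mx].
have yn : U :\ y != set0 by apply: ne_sub (sub_setD1 U yY) ne.
rewrite yn h_ev setID1_notin // -/S ne -/x !inE (negbTE xU) andbF /=.
by rewrite setD1U1 // !scalerA -scalerDl fs_pair2 // scale0r sub0mx.
Qed.

Lemma Lv_mono j j' n : (j <= j')%N -> (dmx (Lv j n) <= dmx (Lv j' n))%MS.
Proof.
move=> jj; apply: dmxS => U; rewrite /Lv => /andP[/andP[-> c] ->].
by rewrite (leq_trans c jj).
Qed.

Lemma Lv_step j n : (dmx (Lv j n) *m Em <= dmx (Lv j.-1 n))%MS.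
Proof.
apply: dmxM_sub => U /andP[/andP[UW c] /eqP nU].
case: (boolP (U :&: Y == set0)) => [/eqP U0|ne].
  by rewrite E_pure //; apply: ev_dmx; rewrite /Lv UW U0 cards0 nU eqxx.
apply: submx_trans (E_low UW ne) _; apply: dmxS => T; rewrite /Lv nU.
move=> /andP[/andP[-> c'] ->]; rewrite andbT /=; apply: leq_trans c' _.
by rewrite -!subn1 leq_sub2r.
Qed.

Definition P0 : pred {set V} := fun U => (U \in W) && (U :&: Y == set0).

Lemma bd_Em : bd *m Em = Em *m bd.
Proof.
rewrite /Em /Dm mulmxBr mulmxBl mulmx1 mul1mx !mulmxDr !mulmxDl !mulmxA bdbd mul0mx.
by rewrite -!mulmxA bdbd !mulmx0 add0r addr0.
Qed.

Lemma Em_fix (v : 'rV[F]_N) : (v <= dmx P0)%MS -> v *m Em = v.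
Proof. by apply: dmx_fix => U /andP[UW /eqP U0]; apply: E_pure. Qed.

Lemma hm_kill (v : 'rV[F]_N) : (v <= dmx P0)%MS -> v *m hm = 0.
Proof. by apply: dmx_kill => U /andP[UW /eqP U0]; rewrite h_ev U0 eqxx. Qed.

Definition itE (j : nat) (v : 'rV[F]_N) : 'rV[F]_N := iter j (fun w : 'rV[F]_N => w *m Em) v.

Lemma relacyc k (c : 'rV[F]_N) : (c <= chainmx F W k)%MS -> (c *m bd <= dmx P0)%MS ->
  (c <= dmx (fun U => P0 U && (#|U| == k.+1)) + chainmx F W k.+1 *m bd)%MS.
Proof.
move=> cW cb; set n := #|V|.
have c0 : (c <= dmx (Lv n k.+1))%MS.
  apply: submx_trans cW _; rewrite chainmx_dmx; apply: dmxS => U /andP[UW sU].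
  by rewrite /Lv UW sU max_card.
have itL : forall i, (itE i c <= dmx (Lv (n - i) k.+1))%MS.
  elim=> [|i IH]; first by rewrite subn0.
  rewrite /itE iterS -/(itE i c) subnS.
  by apply: submx_trans (Lv_step _ _); apply: submxMr.
have tele : forall i, c - itE i c = (\sum_(j < i) itE j c) *m Dm.
  elim=> [|i IH]; first by rewrite big_ord0 mul0mx subrr.
  rewrite big_ord_recr /= mulmxDl -IH /Em mulmxBr mulmx1.
  by rewrite opprB addrA addrAC.
have cbd : forall i, itE i c *m bd = c *m bd.
  elim=> [//|i IH]; rewrite /itE iterS -/(itE i c) -mulmxA -bd_Em mulmxA IH.
  exact: Em_fix.
set y := \sum_(j < n) itE j c.
have ce : c = itE n c + (y *m hm) *m bd.
  apply/eqP; rewrite -subr_eq0 opprD addrA tele -/y /Dm mulmxDr !mulmxA.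
  rewrite -[X in _ + X - _]mulmxA [X in _ + X - _](_ : _ = 0) ?addr0 ?subrr //.
  rewrite mulmx_suml; apply: big1 => j _; rewrite mulmxA cbd; exact: hm_kill.
rewrite ce; apply: addmx_sub_adds.
  apply: submx_trans (itL n) _; rewrite subnn; apply: dmxS => U.
  by rewrite /Lv /P0 leqn0 cards_eq0 => /andP[/andP[-> ->] ->].
apply: submxMr; apply: (dmx_subM (Q := Lv n k.+1)).
  move=> U /andP[/andP[UW _] /eqP sU]; apply: submx_trans (h_supp UW) _.
  rewrite chainmx_dmx; apply: dmxS => T; rewrite /Lv sU.
  by move=> /andP[/andP[-> _] ->].
apply: summx_sub => j _; apply: submx_trans (itL j) _; apply: Lv_mono.
exact: leq_subr.
Qed.

End RelAcyc.


Section Pers.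
Variables (F : fieldType) (V : finType).
Local Notation N := #|{set V}|.
Local Notation bd := (bdmx F V).
Local Notation ev := (@ev F V).
Local Notation dmx := (@dmx F V).
Local Notation chainmx := (@chainmx F V).

Lemma chain_mono (K K' : {set {set V}}) k : K \subset K' -> (chainmx K k <= chainmx K' k)%MS.
Proof.
move=> KK; rewrite !chainmx_dmx; apply: dmxS => U /andP[UK ->].
by rewrite (subsetP KK).
Qed.

Lemma chain_dmx (K : {set {set V}}) k : (chainmx K k <= dmx (mem K))%MS.
Proof. by rewrite chainmx_dmx; apply: dmxS => U /andP[]. Qed.

Lemma bd_faces (K : {set {set V}}) k :
  (forall U T : {set V}, U \in K -> T \subset U -> T != set0 -> T \in K) ->
  (chainmx K k *m bd <= dmx (mem K))%MS.
Proof.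
move=> Kf; rewrite chainmx_dmx; apply: dmxM_sub => U /andP[UK _].
rewrite bd_ev; apply: summx_sub => y /andP[yU yn]; apply: scalemx_sub.
by apply: ev_dmx; apply: Kf UK (subD1set U y) yn.
Qed.

Lemma bd_decomp m (C : 'M[F]_(m, N)) (z : 'rV[F]_N) :
  (z <= C *m bd)%MS -> exists2 w : 'rV[F]_N, (w <= C)%MS & z = w *m bd.
Proof. by case/submxP => D ->; exists (D *m C); rewrite ?submxMl ?mulmxA. Qed.

Lemma bd_bd_zero m (C : 'M[F]_(m, N)) (v : 'rV[F]_N) : (v <= C *m bd)%MS -> v *m bd = 0.
Proof. by case/bd_decomp => w _ ->; rewrite -mulmxA bdbd mulmx0. Qed.

Lemma pers_eq (K K' W W' : {set {set V}}) k :
  K \subset W -> K' \subset W' -> K \subset K' -> W \subset W' ->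
  (forall U T : {set V}, U \in K' -> T \subset U -> T != set0 -> T \in K') ->
  (forall c : 'rV[F]_N, (c <= chainmx W k)%MS -> (c *m bd <= dmx (mem K))%MS ->
     (c <= chainmx K k + chainmx W k.+1 *m bd)%MS) ->
  (forall c : 'rV[F]_N, (c <= chainmx W' k.+1)%MS -> (c *m bd <= dmx (mem K'))%MS ->
     (c <= chainmx K' k.+1 + chainmx W' k.+2 *m bd)%MS) ->
  pers_dim F K K' k = pers_dim F W W' k.
Proof.
move=> KW KW' KK' WW' K'f RA RA'.
rewrite /pers_dim.
set ZK := cyclemx F K k; set BK := bdrymx F K' k.
set ZW := cyclemx F W k; set BW := bdrymx F W' k.
have BKW : (BK <= BW)%MS.
  by apply: submxMr; apply: chain_mono.
have S1 : (ZW + BW :=: ZK + BW)%MS.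
  apply/eqmxP/andP; split; last first.
    apply: addsmxS => //; rewrite sub_capmx capmxSr andbT.
    by apply: submx_trans (capmxSl _ _) _; apply: chain_mono.
  rewrite addsmx_sub addsmxSr andbT.
  apply/row_subP => i; set z := row i ZW.
  have zW : (z <= ZW)%MS by apply: row_sub.
  move: zW; rewrite sub_capmx => /andP[zc /sub_kermxP z0].
  have := RA z zc; rewrite z0 sub0mx => /(_ isT) /sub_addsmxP[[u1 u2] /= ze].
  rewrite ze; apply: addmx_sub_adds.
    rewrite sub_capmx submxMl /=; apply/sub_kermxP.
    move: z0; rewrite ze mulmxDl [X in _ + X = _](_ : _ = 0) ?addr0 //.
    by rewrite -!mulmxA bdbd !mulmx0.
  apply: submx_trans (submxMl _ _) _; apply: submxMr; exact: chain_mono.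
have S2 : \rank ((ZK + BK) :&: BW)%MS = \rank BK.
  apply/eqP; rewrite eqn_leq; apply/andP; split; apply: mxrankS; last first.
    by rewrite sub_capmx addsmxSr BKW.
  apply/row_subP => i; set z := row i _.
  have : (z <= (ZK + BK) :&: BW)%MS by apply: row_sub.
  rewrite sub_capmx => /andP[zA zB].
  case/bd_decomp: zB => w wW' ze.
  have wb : (w *m bd <= dmx (mem K'))%MS.
    rewrite -ze; apply: submx_trans zA _; rewrite addsmx_sub; apply/andP; split.
      apply: submx_trans (capmxSl _ _) _; apply: submx_trans (chain_dmx K' k).
      exact: chain_mono.
    exact: bd_faces.
  case/sub_addsmxP: (RA' w wW' wb) => [[u1 u2] /= we].
  rewrite ze we mulmxDl [X in _ + X](_ : _ = 0) ?addr0.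
    by rewrite -mulmxA submxMl.
  by rewrite -!mulmxA bdbd !mulmx0.
have S3 : \rank (ZK + BK + BW)%MS = \rank (ZW + BW)%MS.
  rewrite S1; apply/eqP; rewrite eqn_leq; apply/andP; split; apply: mxrankS.
    rewrite !addsmx_sub addsmxSr !andbT; apply/andP; split; first exact: addsmxSl.
    by apply: submx_trans BKW (addsmxSr _ _).
  by apply: addsmxS => //; apply: addsmxSl.
have := mxrank_sum_cap (ZK + BK)%MS BW; rewrite S2 S3.
have h1 : (\rank BK <= \rank (ZK + BK)%MS)%N by apply: mxrankS; apply: addsmxSr.
have h2 : (\rank BW <= \rank (ZW + BW)%MS)%N by apply: mxrankS; apply: addsmxSr.
lia.
Qed.

End Pers.


Section Transfer.
Variables (F : fieldType) (V1 V2 : finType) (f : V1 -> V2).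
Hypotheses (finj : injective f)
  (ford : forall x y, (enum_rank (f x) < enum_rank (f y))%N = (enum_rank x < enum_rank y)%N).
Local Notation N1 := #|{set V1}|.
Local Notation N2 := #|{set V2}|.

Lemma imsetD1' (s : {set V1}) y : f @: (s :\ y) = (f @: s) :\ f y.
Proof.
apply/setP => z; rewrite !inE; apply/imsetP/andP => [[w] |[zy /imsetP[w ws zE]]].
  by rewrite !inE => /andP[wy ws] ->; rewrite (inj_eq finj) wy imset_f.
exists w => //; rewrite !inE ws andbT; apply: contraNneq zy => wy; by rewrite zE wy.
Qed.

Lemma fs_im (s : {set V1}) y : face_sign F (f @: s) (f y) = face_sign F s y.
Proof.
rewrite /face_sign; congr (_ ^+ _).
have -> : [set w in f @: s | (enum_rank w < enum_rank (f y))%N] =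
          f @: [set w in s | (enum_rank w < enum_rank y)%N].
  apply/setP => z; rewrite !inE; apply/andP/imsetP => [[/imsetP[w ws ->] h]|[w]].
    by exists w => //; rewrite inE ws -ford.
  by rewrite inE => /andP[ws h] ->; rewrite imset_f // ford.
by rewrite card_imset.
Qed.

Definition Tm : 'M[F]_(N1, N2) := \matrix_(i, j) (f @: (enum_val i : {set V1}) == enum_val j)%:R.
Definition Tt : 'M[F]_(N2, N1) := \matrix_(j, i) (enum_val j == f @: (enum_val i : {set V1}))%:R.

Lemma Tm_ev s : ev F s *m Tm = ev F (f @: s).
Proof.
apply/rowP => j; rewrite ev_mul !mxE enum_rankK eqxx /= -(can2_eq enum_valK enum_rankK).
by rewrite eq_sym.
Qed.

Lemma TmTt : Tm *m Tt = 1%:M.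
Proof.
apply/row_matrixP => i; rewrite row_mul !row_ev mulmx1 Tm_ev.
apply/rowP => i'; rewrite ev_mul !mxE enum_rankK.
by rewrite (inj_eq (imset_inj finj)) eqxx enum_valK (inj_eq enum_val_inj) eq_sym.
Qed.

Lemma Tm_free : row_free Tm.
Proof. by apply/row_freeP; exists Tt; exact: TmTt. Qed.

Lemma Tm_inj0 (u : 'rV[F]_N1) : u *m Tm = 0 -> u = 0.
Proof. by move=> h; rewrite -[u]mulmx1 -TmTt mulmxA h mul0mx. Qed.

Lemma bd_Tm : bdmx F V1 *m Tm = Tm *m bdmx F V2.
Proof.
apply/row_matrixP => i; rewrite !row_mul !row_ev; set s := enum_val i.
rewrite Tm_ev bd_ev bd_ev mulmx_suml.
rewrite big_imset_cond /=; last by move=> a b _ _; apply: finj.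
apply: eq_big => [y|y /andP[ys _]].
  by rewrite -imsetD1' imset_eq0.
by rewrite -scalemxAl Tm_ev fs_im imsetD1'.
Qed.

Local Notation im K := [set f @: (s : {set V1}) | s in K].

Lemma chain_Tm (K : {set {set V1}}) k : (chainmx F (im K) k :=: chainmx F K k *m Tm)%MS.
Proof.
apply/eqmxP/andP; split.
  rewrite chainmx_dmx -[dmx _ _]mulmx1; apply: dmxM_sub => t /andP[/imsetP[s sK ->] c].
  rewrite mulmx1 -Tm_ev; apply: submxMr; rewrite chainmx_dmx; apply: ev_dmx.
  by rewrite sK -(card_imset s finj).
rewrite chainmx_dmx; apply: dmxM_sub => s /andP[sK c]; rewrite Tm_ev chainmx_dmx.
by apply: ev_dmx; rewrite imset_f // card_imset.
Qed.

Lemma bdry_Tm (L : {set {set V1}}) k : (bdrymx F (im L) k :=: bdrymx F L k *m Tm)%MS.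
Proof.
have := eqmxMr (bdmx F V2) (chain_Tm L k.+1).
by rewrite -mulmxA -bd_Tm mulmxA.
Qed.

Lemma cyc_Tm (K : {set {set V1}}) k : (cyclemx F (im K) k :=: cyclemx F K k *m Tm)%MS.
Proof.
apply/eqmxP/andP; split.
  apply/row_subP => i; set v := row i _.
  have : (v <= cyclemx F (im K) k)%MS by apply: row_sub.
  rewrite sub_capmx => /andP[vC /sub_kermxP v0].
  move: vC; rewrite (chain_Tm K k) => /submxP[D vE].
  set u := D *m chainmx F K k.
  have uE : v = u *m Tm by rewrite vE mulmxA.
  rewrite uE; apply: submxMr; rewrite sub_capmx submxMl; apply/sub_kermxP.
  by apply: Tm_inj0; rewrite -mulmxA bd_Tm mulmxA -uE v0.
rewrite sub_capmx; apply/andP; split.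
  by rewrite (chain_Tm K k); apply: submxMr; apply: capmxSl.
apply/sub_kermxP; rewrite -mulmxA -bd_Tm mulmxA.
by have := capmxSr (chainmx F K k) (kermx (bdmx F V1)); move/sub_kermxP ->; rewrite mul0mx.
Qed.

Lemma pers_Tm (K L : {set {set V1}}) k : pers_dim F (im K) (im L) k = pers_dim F K L k.
Proof.
rewrite /pers_dim (adds_eqmx (cyc_Tm K k) (bdry_Tm L k)) -addsmxMr (bdry_Tm L k).
by rewrite !(mxrankMfree _ Tm_free).
Qed.

End Transfer.


Lemma enum_rank_nat (T : finType) (x : T) : (enum_rank x : nat) = index x (enum T).
Proof.
rewrite /enum_rank enum_rank_in.unlock insubdK //.
by rewrite -topredE /= cardE index_mem mem_enum.
Qed.

Section SumRank.
Variables T1 T2 : finType.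
Lemma enum_sum : enum {: T1 + T2} = [seq inl x | x <- enum T1] ++ [seq inr y | y <- enum T2].
Proof. by rewrite !enumT unlock /= /sum_enum unlock. Qed.

Lemma rank_inl (x : T1) : (enum_rank (inl x : T1 + T2) : nat) = enum_rank x.
Proof.
rewrite !enum_rank_nat enum_sum index_cat.
have -> : (inl x : T1 + T2) \in [seq (inl y : T1 + T2) | y <- enum T1].
  by apply: (map_f (fun y => inl y)); rewrite mem_enum.
by rewrite index_map //; move=> a b [].
Qed.

Lemma rank_inr (y : T2) : (enum_rank (inr y : T1 + T2) : nat) = #|T1| + enum_rank y.
Proof.
rewrite !enum_rank_nat enum_sum index_cat.
have -> : ((inr y : T1 + T2) \in [seq (inl x : T1 + T2) | x <- enum T1]) = false.
  by apply/negbTE/mapP => -[].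
by rewrite size_map -cardE index_map //; move=> a b [].
Qed.
End SumRank.

Section PersRel.
Variables (F : fieldType) (V : finType).

Lemma eq_dmx (Q Q' : pred {set V}) : Q =1 Q' -> dmx F Q = dmx F Q'.
Proof. by move=> e; apply/matrixP => i j; rewrite !mxE e. Qed.

Lemma pers_rel (W W' : {set {set V}}) (Y : {set V}) (g g' : {set V} -> V) k :
  (forall U T : {set V}, U \in W -> T \subset U -> T != set0 -> T \in W) ->
  (forall U : {set V}, U \in W -> U :&: Y != set0 -> g (U :&: Y) \notin Y) ->
  (forall U : {set V}, U \in W -> U :&: Y != set0 -> g (U :&: Y) |: U \in W) ->
  (forall U T : {set V}, U \in W' -> T \subset U -> T != set0 -> T \in W') ->
  (forall U : {set V}, U \in W' -> U :&: Y != set0 -> g' (U :&: Y) \notin Y) ->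
  (forall U : {set V}, U \in W' -> U :&: Y != set0 -> g' (U :&: Y) |: U \in W') ->
  W \subset W' ->
  pers_dim F [set U in W | U :&: Y == set0] [set U in W' | U :&: Y == set0] k =
  pers_dim F W W' k.
Proof.
move=> Wf gY gW Wf' gY' gW' WW'.
set K := [set U in W | _]; set K' := [set U in W' | _].
have eK : forall j, chainmx F K j = dmx F (fun U => P0 W Y U && (#|U| == j.+1)).
  by move=> j; rewrite chainmx_dmx; apply: eq_dmx => U; rewrite inE.
have eK' : forall j, chainmx F K' j = dmx F (fun U => P0 W' Y U && (#|U| == j.+1)).
  by move=> j; rewrite chainmx_dmx; apply: eq_dmx => U; rewrite inE.
have mK : dmx F (mem K) = dmx F (P0 W Y) by apply: eq_dmx => U; rewrite -[mem K U]/(U \in K) inE.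
have mK' : dmx F (mem K') = dmx F (P0 W' Y) by apply: eq_dmx => U; rewrite -[mem K' U]/(U \in K') inE.
apply: pers_eq.
- by apply/subsetP => U; rewrite inE => /andP[].
- by apply/subsetP => U; rewrite inE => /andP[].
- by apply/subsetP => U; rewrite !inE => /andP[UW ->]; rewrite (subsetP WW').
- exact: WW'.
- move=> U T; rewrite !inE => /andP[UW /eqP U0] TU Tn; rewrite (Wf' U) //=.
  by rewrite -subset0 -U0 setSI.
- move=> c cW cb; rewrite eK; apply: (relacyc Wf gY gW) => //; by rewrite -mK.
- move=> c cW cb; rewrite eK'; apply: (relacyc Wf' gY' gW') => //; by rewrite -mK'.
Qed.

End PersRel.


Section App.
Variables (X : finType) (M : nat) (P : 'I_M -> {set {set X}}).
Local Notation A := ('I_M * {set X})%type.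
Local Notation V := (X + A)%type.

Definition drel (m : nat) (x : X) (a : A) : bool :=
  (a.1 < m)%N && (a.2 \in P a.1) && (x \in a.2).

Definition okv (m : nat) (U : {set V}) (x0 : X) (a0 : A) (u : V) : bool :=
  match u with
  | inl y => drel m y a0
  | inr b => drel m x0 b && [forall v in U, if v is inl y then drel m y b else true]
  end.

Definition Wm (m : nat) : {set {set V}} :=
  [set U : {set V} | (U != set0) &&
     [exists x0 : X, [exists a0 : A, drel m x0 a0 && [forall u in U, okv m U x0 a0 u]]]].

Lemma WmP m U : reflect (U != set0 /\ exists x0 a0, [/\ drel m x0 a0,
   (forall y, inl y \in U -> drel m y a0),
   (forall b, inr b \in U -> drel m x0 b) &
   (forall y b, inl y \in U -> inr b \in U -> drel m y b)]) (U \in Wm m).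
Proof.
rewrite inE; apply: (iffP andP) => [[Un /existsP[x0 /existsP[a0 /andP[r /forall_inP H]]]]|].
  split=> //; exists x0, a0; split => //.
  - by move=> y /H.
  - by move=> b /H /andP[].
  - by move=> y b yU /H /andP[_ /forall_inP /(_ _ yU)].
case=> Un [x0 [a0 [r H1 H2 H3]]]; split=> //; apply/existsP; exists x0; apply/existsP; exists a0.
rewrite r /=; apply/forall_inP => -[y|b] uU /=; first exact: H1.
rewrite H2 //=; apply/forall_inP => -[y|//] yU; exact: H3.
Qed.

Lemma Wm_face m (U T : {set V}) : U \in Wm m -> T \subset U -> T != set0 -> T \in Wm m.
Proof.
move=> /WmP[_ [x0 [a0 [r H1 H2 H3]]]] TU Tn; apply/WmP; split=> //.
exists x0, a0; split=> // [y yT|b bT|y b yT bT].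
- exact: H1 (subsetP TU _ yT).
- exact: H2 (subsetP TU _ bT).
- exact: H3 (subsetP TU _ yT) (subsetP TU _ bT).
Qed.

Lemma rel_mono m m' x a : (m <= m')%N -> drel m x a -> drel m' x a.
Proof.
by move=> mm /andP[/andP[h1 h2] h3]; rewrite /drel h2 h3 (leq_trans h1 mm).
Qed.

Lemma Wm_mono m m' : (m <= m')%N -> Wm m \subset Wm m'.
Proof.
move=> mm; apply/subsetP => U /WmP[Un [x0 [a0 [r H1 H2 H3]]]]; apply/WmP; split=> //.
exists x0, a0; split; first exact: rel_mono r.
- by move=> y /H1; apply: rel_mono.
- by move=> b /H2; apply: rel_mono.
- by move=> y b yU bU; apply: rel_mono (H3 _ _ yU bU).
Qed.

Definition isl (v : V) : bool := if v is inl _ then true else false.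
Definition YA : {set V} := [set v : V | ~~ isl v].
Definition YX : {set V} := [set v : V | isl v].

Lemma Kx_eq m : [set U in Wm m | U :&: YA == set0] =
  [set (@inl X A) @: (s : {set X}) | s in MCF P m].
Proof.
apply/setP => U; rewrite inE; apply/andP/imsetP.
  move=> [/WmP[Un [x0 [a0 [r H1 H2 H3]]]] /eqP UY].
  have noR : forall b, inr b \notin U.
    move=> b; apply/negP => bU; have : inr b \in U :&: YA by rewrite !inE bU.
    by rewrite UY inE.
  exists [set x | inl x \in U].
    rewrite inE; apply/andP; split.
      case/set0Pn: Un => -[y yU|b bU]; last by have := noR b; rewrite bU.
      by apply/set0Pn; exists y; rewrite inE.
    apply/existsP; exists a0.1; move: r => /andP[/andP[h1 h2] _]; rewrite h1 /=.
    apply/existsP; exists a0.2; rewrite h2 /=; apply/subsetP => y; rewrite inE.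
    by move/H1 => /andP[_].
  apply/setP => -[y|b]; rewrite ?mem_imset ?inE //; last first.
    rewrite (negbTE (noR b)); apply/esym/negbTE/imsetP => -[? _] //.
  by move=> a b' [].
case=> s; rewrite inE => /andP[sn /existsP[l /andP[lm /existsP[C /andP[CP sC]]]]] ->.
case/set0Pn: sn => x0 xs.
split; last first.
  apply/eqP/setP => v; rewrite !inE; apply/negbTE; apply/andP => -[/imsetP[y _ ->]].
  by [].
apply/WmP; split.
  by apply/set0Pn; exists (inl x0); apply: imset_f.
exists x0, (l, C); split.
- by rewrite /drel lm CP (subsetP sC).
- move=> y /imsetP[y' y's [->]]; by rewrite /drel lm CP (subsetP sC).
- by move=> b /imsetP[].
- by move=> y b _ /imsetP[].
Qed.

Lemma Ka_eq m : [set U in Wm m | U :&: YX == set0] =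
  [set (@inr X A) @: (S : {set A}) | S in MCN P m].
Proof.
apply/setP => U; rewrite inE; apply/andP/imsetP.
  move=> [/WmP[Un [x0 [a0 [r H1 H2 H3]]]] /eqP UY].
  have noL : forall y, inl y \notin U.
    move=> y; apply/negP => yU; have : inl y \in U :&: YX by rewrite !inE yU.
    by rewrite UY inE.
  exists [set a | inr a \in U].
    rewrite inE; apply/and3P; split.
    - case/set0Pn: Un => -[y yU|b bU]; first by have := noL y; rewrite yU.
      by apply/set0Pn; exists b; rewrite inE.
    - apply/forall_inP => a; rewrite inE => /H2 /andP[/andP[-> ->] _] //.
    - apply/existsP; exists x0; apply/forall_inP => a; rewrite inE.
      by move=> /H2 /andP[_ ->].
  apply/setP => -[y|b]; rewrite ?mem_imset ?inE //; last by move=> a b' [].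
  rewrite (negbTE (noL y)); apply/esym/negbTE/imsetP => -[? _] //.
case=> S; rewrite inE => /and3P[Sn /forall_inP Sv /existsP[x0 /forall_inP Sx]] ->.
case/set0Pn: Sn => a0 a0S.
split; last first.
  apply/eqP/setP => v; rewrite !inE; apply/negbTE; apply/andP => -[/imsetP[y _ ->]].
  by [].
apply/WmP; split.
  by apply/set0Pn; exists (inr a0); apply: imset_f.
have relS : forall b, b \in S -> drel m x0 b.
  by move=> b bS; rewrite /drel Sx // andbT; apply: Sv.
exists x0, a0; split.
- exact: relS.
- by move=> y /imsetP[].
- by move=> b /imsetP[b' b'S [->]]; apply: relS.
- by move=> y b /imsetP[].
Qed.

Definition gA (d : V) (m : nat) (S' : {set V}) : V :=
  if [pick x | [forall v in S', if v is inr b then drel m x b else true]] is Some x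
  then inl x else d.

Definition gX (d : V) (m : nat) (S' : {set V}) : V :=
  if [pick a | [forall v in S', if v is inl y then drel m y a else true]] is Some a
  then inr a else d.

Lemma gA_prop d m (U : {set V}) : U \in Wm m -> U :&: YA != set0 ->
  gA d m (U :&: YA) \notin YA /\ gA d m (U :&: YA) |: U \in Wm m.
Proof.
move=> /WmP[Un [x0 [a0 [r H1 H2 H3]]]] ne.
rewrite /gA; case: pickP => [x /forall_inP Px|/(_ x0)]; last first.
  move/negP; case; apply/forall_inP => -[y|b] //; rewrite !inE => /andP[bU _].
  exact: H2.
have Px' : forall b, inr b \in U -> drel m x b.
  by move=> b bU; apply: (Px (inr b)); rewrite !inE bU.
have [b0 b0U] : exists b0, inr b0 \in U.
  case/set0Pn: ne => -[y|b]; rewrite !inE /=; first by rewrite andbF.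
  by case/andP => bU _; exists b.
split; first by rewrite inE.
apply/WmP; split; first by apply/set0Pn; exists (inl x); rewrite !inE eqxx.
exists x, b0; split.
- exact: Px'.
- move=> y; rewrite !inE => /orP[/eqP [->]|yU]; [exact: Px' | exact: H3].
- by move=> b; rewrite !inE => /orP[/eqP //|bU]; apply: Px'.
- move=> y b; rewrite !inE => /orP[/eqP [->]|yU] /orP[/eqP //|bU]; first exact: Px'.
  exact: H3.
Qed.

Lemma gX_prop d m (U : {set V}) : U \in Wm m -> U :&: YX != set0 ->
  gX d m (U :&: YX) \notin YX /\ gX d m (U :&: YX) |: U \in Wm m.
Proof.
move=> /WmP[Un [x0 [a0 [r H1 H2 H3]]]] ne.
rewrite /gX; case: pickP => [a /forall_inP Pa|/(_ a0)]; last first.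
  move/negP; case; apply/forall_inP => -[y|b] //; rewrite !inE => /andP[yU _].
  exact: H1.
have Pa' : forall y, inl y \in U -> drel m y a.
  by move=> y yU; apply: (Pa (inl y)); rewrite !inE yU.
have [y0 y0U] : exists y0, inl y0 \in U.
  case/set0Pn: ne => -[y|b]; rewrite !inE /=; last by rewrite andbF.
  by case/andP => yU _; exists y.
split; first by rewrite inE.
apply/WmP; split; first by apply/set0Pn; exists (inr a); rewrite !inE eqxx.
exists y0, a; split.
- exact: Pa'.
- by move=> y; rewrite !inE => /orP[/eqP //|yU]; apply: Pa'.
- move=> b; rewrite !inE => /orP[/eqP [->]|bU]; [exact: Pa' | exact: H3].
- move=> y b; rewrite !inE => /orP[/eqP //|yU] /orP[/eqP [->]|bU]; first exact: Pa'.
  exact: H3.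
Qed.

End App.

End MCNHelpers.
Import MCNHelpers.
Unset Implicit Arguments.

Theorem proposition7 (F : fieldType) (X : finType) (M : nat)
  (P : 'I_M -> {set {set X}})
  (hP : forall l : 'I_M, partition (P l) [set: X])
  (k m p : nat) (hm : (1 <= m)%N) (hmp : (m + p <= M)%N) :
  pers_dim F (MCN P m) (MCN P (m + p)) k = pers_dim F (MCF P m) (MCF P (m + p)) k.
Proof.
have M0 : (0 < M)%N by apply: leq_trans hm (leq_trans (leq_addr p m) hmp).
pose A := ('I_M * {set X})%type.
pose d : (X + A)%type := inr (Ordinal M0, set0).
have inl_inj : injective (@inl X A) by move=> a b [].
have inr_inj : injective (@inr X A) by move=> a b [].
have ford_l : forall x y : X, (enum_rank (@inl X A x) < enum_rank (@inl X A y))%N =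
                             (enum_rank x < enum_rank y)%N.
  by move=> x y; rewrite !rank_inl.
have ford_r : forall x y : A, (enum_rank (@inr X A x) < enum_rank (@inr X A y))%N =
                             (enum_rank x < enum_rank y)%N.
  by move=> x y; rewrite !rank_inr ltn_add2l.
rewrite -(pers_Tm F inr_inj ford_r) -(pers_Tm F inl_inj ford_l) -!Ka_eq -!Kx_eq.
have mm : (m <= m + p)%N by apply: leq_addr.
rewrite (pers_rel F (g := gX P d m) (g' := gX P d (m + p))); last first.
- exact: Wm_mono.
- by move=> U UW ne; case: (gX_prop d UW ne).
- by move=> U UW ne; case: (gX_prop d UW ne).
- exact: Wm_face.
- by move=> U UW ne; case: (gX_prop d UW ne).
- by move=> U UW ne; case: (gX_prop d UW ne).
- exact: Wm_face.
rewrite (pers_rel F (g := gA P d m) (g' := gA P d (m + p))) //.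
- exact: Wm_face.
- by move=> U UW ne; case: (gA_prop d UW ne).
- by move=> U UW ne; case: (gA_prop d UW ne).
- exact: Wm_face.
- by move=> U UW ne; case: (gA_prop d UW ne).
- by move=> U UW ne; case: (gA_prop d UW ne).
- exact: Wm_mono.
Qed.
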